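(* Let $F \subseteq \mathbb{Z}_2^\omega$ be a set such that Alter has a winning strategy in the game $\mathcal{G}(F)$. Then there exists an equivalence class $X$ of the relation $\sim$ on $\mathbb{Z}_2^\omega$ such that $X\cap F=\emptyset$.
   Context: $\mathbb{Z}_2^\omega$ is the set of infinite binary sequences indexed by $\omega=\{0,1,2,\dots\}$; $\mathbb{Z}_2^+=\bigcup_{n\ge1}\mathbb{Z}_2^n$ is the set of nonempty finite binary words. The Hamming distance is $\mathrm{hd}(x,y)=|\{k: x(k)\ne y(k)\}|\in\omega\cup\{\omega\}$, and $x\sim y$ iff $\mathrm{hd}(x,y)$ is finite. For $F\subseteq \mathbb{Z}_2^\omega$, $\mathcal{G}(F)$ is the following infinite two-player game of perfect information: players Ego and Alter alternately choose words in $\mathbb{Z}_2^+$, Ego moving first; if the moves are $\epsilon_0,\alpha_1,\epsilon_1,\alpha_2,\dots$, the outcome is the concatenation $\epsilon_0\alpha_1\epsilon_1\alpha_2\cdots\in\mathbb{Z}_2^\omega$. Ego wins if the outcome lies in $F$, otherwise Alter wins. A strategy for Alter is a function $a:\bigcup_{n\ge1}(\mathbb{Z}_2^+)^n\to\mathbb{Z}_2^+$ (Alter's $i$-th move being $\alpha_i=a(\epsilon_0,\dots,\epsilon_{i-1})$); it is winning if every play in which Alter follows it has outcome not in $F$. *)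

(* Defs.v *)
From Stdlib Require Import List Arith.
Import ListNotations.

Definition seq2 := nat -> bool.

Definition word := { w : list bool | w <> [] }.
Definition wlist (w : word) : list bool := proj1_sig w.

(* x ~ y : the Hamming distance is finite, i.e. x and y differ in only
   finitely many coordinates (all differences lie below some bound N). *)
Definition hd_finite (x y : seq2) : Prop :=
  exists N : nat, forall k, N <= k -> x k = y k.

(* Concatenation of an infinite sequence of nonempty words b_0 b_1 b_2 ...
   [concat_aux fuel j n] is the n-th letter of b_j b_{j+1} ... ; since every
   word is nonempty, fuel n+1 suffices. *)
Fixpoint concat_aux (b : nat -> word) (fuel j n : nat) : bool :=
  match fuel with
  | 0 => false
  | S f =>
      if n <? length (wlist (b j)) then nth n (wlist (b j)) false
      else concat_aux b f (S j) (n - length (wlist (b j)))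
  end.

Definition concat_words (b : nat -> word) : seq2 :=
  fun n => concat_aux b (S n) 0 n.

(* A strategy for Alter: a function on nonempty finite sequences of words,
   a sequence (e_0, e_1, ..., e_{i-1}) being given as [a e_0 [e_1;...;e_{i-1}]]. *)
Definition alter_strategy := word -> list word -> word.

Definition ego_tail (e : nat -> word) (i : nat) : list word :=
  map e (seq 1 (i - 1)).

Definition alter_move (a : alter_strategy) (e : nat -> word) (i : nat) : word :=
  a (e 0) (ego_tail e i).

(* The sequence of moves e_0, alpha_1, e_1, alpha_2, e_2, ... *)
Definition play_blocks (a : alter_strategy) (e : nat -> word) (j : nat) : word :=
  if Nat.even j then e (Nat.div2 j) else alter_move a e (S (Nat.div2 j)).

Definition outcome (a : alter_strategy) (e : nat -> word) : seq2 :=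
  concat_words (play_blocks a e).

Definition alter_winning (F : seq2 -> Prop) (a : alter_strategy) : Prop :=
  forall e : nat -> word, ~ F (outcome a e).

(* Main.v *)
Require Import Defs.
From Stdlib Require Import List Arith Lia Cantor ConstructiveEpsilon FunctionalExtensionality.
From mathcomp Require choice eqtype.
Import choice.
Import ListNotations.

Definition mkw (l : list bool) : word :=
  exist (fun w => w <> []) (l ++ [false]) (fun H => app_cons_not_nil l [] false (eq_sym H)).

Definition flat (b : nat -> word) j m := concat (map (fun i => wlist (b i)) (seq j m)).
Definition fin (a : alter_strategy) e k := flat (play_blocks a e) 0 (2*k).

Lemma wlen w : 1 <= length (wlist w).
Proof. destruct w as [[|c l] H]; simpl; [contradiction|lia]. Qed.

Lemma flat_S b j m : flat b j (S m) = wlist (b j) ++ flat b (S j) m.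
Proof. reflexivity. Qed.

Lemma concat_aux_flat b f : forall j n m, n < f -> n < length (flat b j m) ->
  concat_aux b f j n = nth n (flat b j m) false.
Proof.
  induction f as [|f IH]; intros j n m Hf Hl; [lia|].
  destruct m as [|m]; [simpl in Hl; lia|].
  rewrite flat_S in *. simpl.
  destruct (Nat.ltb_spec n (length (wlist (b j)))) as [Hlt|Hge].
  - rewrite app_nth1; auto.
  - rewrite app_nth2 by lia. rewrite length_app in Hl.
    pose proof (wlen (b j)).
    apply IH; lia.
Qed.

Lemma pb_even a e k : play_blocks a e (2*k) = e k.
Proof. unfold play_blocks. rewrite Nat.even_mul, Nat.div2_double. reflexivity. Qed.

Lemma pb_odd a e k : play_blocks a e (2*k+1) = alter_move a e (S k).
Proof. unfold play_blocks. rewrite Nat.even_odd, Nat.div2_odd'. reflexivity. Qed.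

Lemma fin_S a e k : fin a e (S k) = fin a e k ++ wlist (e k) ++ wlist (alter_move a e (S k)).
Proof.
  unfold fin, flat. replace (2 * S k) with (2*k + 2) by lia.
  rewrite seq_app, map_app, concat_app. f_equal.
  replace (seq (0 + 2*k) 2) with [2*k; 2*k+1] by (simpl; f_equal; f_equal; lia).
  cbn [map concat]. rewrite pb_even, pb_odd, app_nil_r. reflexivity.
Qed.

Lemma fin_len a e k : k <= length (fin a e k).
Proof.
  induction k; [lia|]. rewrite fin_S, !length_app.
  pose proof (wlen (e k)). lia.
Qed.

Lemma fin_agree a e e' k : (forall i, i < k -> e i = e' i) -> fin a e k = fin a e' k.
Proof.
  induction k; intros H; [reflexivity|].
  rewrite !fin_S. rewrite IHk by (intros; apply H; lia).
  rewrite H by lia. f_equal. f_equal. f_equal.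
  unfold alter_move, ego_tail. rewrite H by lia. f_equal.
  apply map_ext_in. intros i Hi. apply in_seq in Hi. apply H. lia.
Qed.

Definition prefix (p l : list bool) := exists r, l = p ++ r.

Lemma prefix_trans p q r : prefix p q -> prefix q r -> prefix p r.
Proof. intros [x ->] [y ->]. exists (x ++ y). now rewrite app_assoc. Qed.

Definition Y (u X : list bool) := u ++ skipn (length u) X.

Lemma Y_app u X Z : prefix (Y u X) (Y u (X ++ Z)).
Proof. unfold Y. rewrite skipn_app. eexists. now rewrite app_assoc. Qed.

Lemma Y_app_long u X Z : length u <= length X -> Y u (X ++ Z) = Y u X ++ Z.
Proof.
  intros H. unfold Y. rewrite skipn_app.
  replace (length u - length X) with 0 by lia. simpl. now rewrite app_assoc.
Qed.

Record St := { SX : list bool; SE : list bool -> nat -> word; SK : list bool -> nat }.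

Definition sched (t : nat) : list bool :=
  match @choice.unpickle (list bool) (fst (Cantor.of_nat t)) with Some u => u | None => [] end.

Definition upd (e : nat -> word) k w := fun i => if Nat.eqb i k then w else e i.

Definition step a (s : St) (u : list bool) : St :=
  let X' := SX s ++ repeat false (length u - length (SX s)) in
  let T := Y u X' in
  let e := SE s u in let k := SK s u in
  let o := fin a e k in
  let e' := upd e k (mkw (skipn (length o) T)) in
  let al := alter_move a e' (S k) in
  {| SX := X' ++ false :: wlist al;
     SE := fun v => if list_eq_dec Bool.bool_dec v u then e' else SE s v;
     SK := fun v => if list_eq_dec Bool.bool_dec v u then S k else SK s v |}.

Definition init : St := {| SX := []; SE := fun _ _ => mkw []; SK := fun _ => 0 |}.

Fixpoint st a n := match n with 0 => init | S n => step a (st a n) (sched n) end.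

Definition Inv a s := forall v, prefix (fin a (SE s v) (SK s v)) (Y v (SX s)).

Lemma step_inv a s u : Inv a s -> Inv a (step a s u).
Proof.
  intros H v. unfold step. simpl.
  destruct (list_eq_dec Bool.bool_dec v u) as [->|Hne].
  - rewrite fin_S.
    rewrite (fin_agree a _ (SE s u)) by
      (intros i Hi; unfold upd; destruct (Nat.eqb_spec i (SK s u)); [lia|reflexivity]).
    unfold upd at 1. rewrite Nat.eqb_refl. simpl.
    set (X' := SX s ++ repeat false (length u - length (SX s))).
    assert (Hp : prefix (fin a (SE s u) (SK s u)) (Y u X')).
    { eapply prefix_trans; [apply H|]. apply Y_app. }
    destruct Hp as [r Hr]. rewrite Hr at 1.
    rewrite skipn_app, skipn_all, Nat.sub_diag. simpl.
    rewrite Y_app_long.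
    + exists []. rewrite Hr. rewrite !app_assoc. rewrite app_nil_r. simpl.
      rewrite <- !app_assoc. reflexivity.
    + unfold X'. rewrite length_app, repeat_length. lia.
  - eapply prefix_trans; [apply H|].
    rewrite <- app_assoc. apply Y_app.
Qed.

Lemma st_inv a n : Inv a (st a n).
Proof.
  induction n; simpl.
  - intros v. exists (Y v []). reflexivity.
  - now apply step_inv.
Qed.

Lemma st_mono1 a n : prefix (SX (st a n)) (SX (st a (S n))) /\
  S (length (SX (st a n))) <= length (SX (st a (S n))) /\
  forall v, SK (st a n) v <= SK (st a (S n)) v /\
    forall i, i < SK (st a n) v -> SE (st a (S n)) v i = SE (st a n) v i.
Proof.
  simpl. unfold step. simpl. split; [|split].
  - eexists. now rewrite <- app_assoc.
  - rewrite !length_app. simpl. lia.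
  - intros v. destruct (list_eq_dec Bool.bool_dec v (sched n)) as [->|]; [|split; auto].
    split; [lia|]. intros i Hi. unfold upd. destruct (Nat.eqb_spec i (SK (st a n) (sched n))); [lia|auto].
Qed.

Lemma st_mono a n m : n <= m -> prefix (SX (st a n)) (SX (st a m)) /\
  forall v, SK (st a n) v <= SK (st a m) v /\
    forall i, i < SK (st a n) v -> SE (st a m) v i = SE (st a n) v i.
Proof.
  induction 1.
  - split; [exists []; now rewrite app_nil_r|]. intros v; split; auto.
  - destruct IHle as [H1 H2]. destruct (st_mono1 a m) as [H3 [_ H4]].
    split; [eapply prefix_trans; eauto|].
    intros v. destruct (H2 v) as [H5 H6]. destruct (H4 v) as [H7 H8].
    split; [lia|]. intros i Hi. rewrite H8 by lia. auto.
Qed.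

Lemma X_len a n : n <= length (SX (st a n)).
Proof.
  induction n; [simpl; lia|]. destruct (st_mono1 a n) as [_ [H _]]. lia.
Qed.

Definition xlim a n := nth n (SX (st a (S n))) false.

Lemma X_nth a s n : n < length (SX (st a s)) -> nth n (SX (st a s)) false = xlim a n.
Proof.
  intros Hn. unfold xlim. destruct (Nat.le_ge_cases s (S n)) as [Hle|Hle].
  - destruct (st_mono a _ _ Hle) as [[r Hr] _]. rewrite Hr, app_nth1; auto.
  - destruct (st_mono a _ _ Hle) as [[r Hr] _]. rewrite Hr, app_nth1; auto.
    pose proof (X_len a (S n)). lia.
Qed.

Lemma K_inc a u s0 : exists s, SK (st a s0) u < SK (st a s) u.
Proof.
  set (t := Cantor.to_nat (choice.pickle u, s0)).
  assert (Ht : sched t = u).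
  { unfold sched, t. rewrite Cantor.cancel_of_to. cbn [fst]. rewrite (@choice.pickleK (list bool)). reflexivity. }
  assert (s0 <= t) by (pose proof (Cantor.to_nat_non_decreasing (choice.pickle u) s0); unfold t; lia).
  exists (S t). destruct (st_mono a _ _ H) as [_ H2]. destruct (H2 u) as [H3 _].
  simpl. unfold step. simpl. rewrite Ht.
  destruct (list_eq_dec Bool.bool_dec u u); [lia|congruence].
Qed.

Theorem proposition7 (F : seq2 -> Prop) :
  (exists a : alter_strategy, alter_winning F a) ->
  exists x : seq2, forall y : seq2, hd_finite x y -> ~ F y.
Proof.
  intros [a Ha]. exists (xlim a). intros y [N HN].
  set (u := map y (seq 0 N)).
  assert (Hex : forall i, exists s, i < SK (st a s) u).
  { induction i.
    - destruct (K_inc a u 0) as [s Hs]. exists s. lia.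
    - destruct IHi as [s0 Hs0]. destruct (K_inc a u s0) as [s Hs]. exists s. lia. }
  set (g := fun i => proj1_sig (constructive_indefinite_ground_description_nat _
              (fun s => lt_dec i (SK (st a s) u)) (Hex i))).
  assert (Hg : forall i, i < SK (st a (g i)) u).
  { intros i. unfold g. destruct constructive_indefinite_ground_description_nat. auto. }
  set (e := fun i => SE (st a (g i)) u i).
  assert (He : forall s i, i < SK (st a s) u -> e i = SE (st a s) u i).
  { intros s i Hi. unfold e. destruct (Nat.le_ge_cases s (g i)) as [Hle|Hle].
    - destruct (st_mono a _ _ Hle) as [_ H]. apply H; auto.
    - destruct (st_mono a _ _ Hle) as [_ H]. symmetry. apply H; auto. }
  assert (Hout : outcome a e = y).
  { apply functional_extensionality. intros n.
    destruct (Hex n) as [s Hs]. set (k := SK (st a s) u) in *.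
    unfold outcome, concat_words.
    pose proof (fin_len a e k) as Hfl.
    rewrite (concat_aux_flat _ _ 0 n (2*k)) by (unfold fin in Hfl; lia).
    change (nth n (fin a e k) false = y n).
    rewrite (fin_agree a e (SE (st a s) u) k) in * by (intros; apply He; auto).
    destruct (st_inv a s u) as [r Hr]. fold k in Hr.
    assert (HY : nth n (Y u (SX (st a s))) false = nth n (fin a (SE (st a s) u) k) false).
    { rewrite Hr, app_nth1; auto; lia. }
    assert (HYl : n < length (Y u (SX (st a s)))).
    { rewrite Hr, length_app. lia. }
    rewrite <- HY. unfold Y in *. rewrite length_app, length_skipn in HYl.
    assert (Hu : length u = N) by (unfold u; now rewrite length_map, length_seq).
    destruct (Nat.lt_ge_cases n N) as [HnN|HnN].
    - rewrite app_nth1 by lia. unfold u.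
      rewrite (nth_indep _ false (y 0)) by (rewrite length_map, length_seq; lia).
      rewrite map_nth, seq_nth by lia. reflexivity.
    - rewrite app_nth2 by lia. rewrite nth_skipn.
      replace (length u + (n - length u)) with n by lia.
      rewrite X_nth by lia. apply HN. auto. }
  rewrite <- Hout. apply Ha.
Qed.
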